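(* Let $\mathcal{U}$ be a CFI on $X=[0,1]$ with slope interval $S$, let $u\in\mathcal{U}$, and suppose $I=[a,b]\subseteq X$ satisfies $\underline u<u<\bar u$ on $I$. Let $h_{a,b}$ be defined as in the context. Then for every $\varepsilon\in[0,1]$, both $u+\varepsilon h_{a,b}$ and $u-\varepsilon h_{a,b}$ are continuous convex functions on $X$ with $\partial(u\pm\varepsilon h_{a,b})(X)\subseteq S$. Furthermore, $h_{a,b}\equiv0$ on $X$ if and only if there exist three (not necessarily distinct) affine functions $\ell_0,\ell_1,\ell_2$ on $I$ with $u|_I=\max\{\ell_0,\ell_1,\ell_2\}$.
   Context: A CFI is $\mathcal{U}=\{u\in\mathcal{K}(X):\underline u\le u\le\bar u,\ \partial u(X)\subseteq S\}$ with $S=[\underline s,\bar s]$, $\underline u\le\bar u$ continuous convex with $\partial\underline u(X),\partial\bar u(X)\subseteq S$; $\mathcal{K}(X)$ is the set of continuous convex functions on $X$ and $\partial u(X)=\bigcup_{x\in\mathrm{int}X}\partial u(x)$. For $u\in\mathcal{K}(X)$ let $t_u(x;a^+)=u(a)+\partial_+u(a)(x-a)$ and $t_u(x;b^-)=u(b)+\partial_-u(b)(x-b)$. Define $g_{a,b}(x)=0$ for $x\notin[a,b]$ and $g_{a,b}(x)=u(x)-\max\{t_u(x;a^+),t_u(x;b^-)\}$ for $x\in[a,b]$. For a function $\phi$ on $X$, $\mathrm{vex}[\phi](x)=\sup\{g(x): g:X\to\mathbb{R}$ convex, $g\le\phi\}$ (convex envelope). Finally $h_{a,b}=\mathrm{vex}[u+g_{a,b}]-u$.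 *)

(* Defs.v *)
From HB Require Import structures.
From mathcomp Require Import all_boot all_order all_algebra.
From mathcomp Require Import all_classical all_reals all_analysis.
Set Implicit Arguments. Unset Strict Implicit. Unset Printing Implicit Defensive.
Import Order.TTheory GRing.Theory Num.Theory.
Import numFieldNormedType.Exports.
Local Open Scope classical_set_scope.
Local Open Scope ring_scope.

Section CFI.
Variable R : realType.

Definition X : set R := `[0, 1].

Definition convex_on_X (f : R -> R) : Prop :=
  forall x y t, x \in X -> y \in X -> 0 <= t <= 1 ->
    f (t * x + (1 - t) * y) <= t * f x + (1 - t) * f y.

Definition cvxK (f : R -> R) : Prop :=
  {within X, continuous f} /\ convex_on_X f.

Definition subdiff (f : R -> R) (x : R) : set R :=
  [set s | forall y, y \in X -> f x + s * (y - x) <= f y].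

Definition subdiff_X (f : R -> R) : set R :=
  [set s | exists2 x, 0 < x < 1 & subdiff f x s].

Definition slopes_in (f : R -> R) (slo shi : R) : Prop :=
  subdiff_X f `<=` `[slo, shi].

Definition dright (f : R -> R) (a : R) : R :=
  lim ((fun h => (f (a + h) - f a) / h) @ 0^'+).
Definition dleft (f : R -> R) (b : R) : R :=
  lim ((fun h => (f b - f (b - h)) / h) @ 0^'+).

Definition tan_right (f : R -> R) (a x : R) : R := f a + dright f a * (x - a).
Definition tan_left (f : R -> R) (b x : R) : R := f b + dleft f b * (x - b).

Definition gab (f : R -> R) (a b : R) (x : R) : R :=
  if (a <= x <= b) then f x - Num.max (tan_right f a x) (tan_left f b x)
  else 0.

Definition vex (phi : R -> R) (x : R) : R :=
  sup [set g x | g in [set g : R -> R | convex_on_X g /\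
                                        forall y, y \in X -> g y <= phi y]].

Definition hab (f : R -> R) (a b : R) (x : R) : R :=
  vex (fun y => f y + gab f a b y) x - f x.

End CFI.

(* Main.v *)
Require Import Defs.
From HB Require Import structures.
From mathcomp Require Import all_boot all_order all_algebra.
From mathcomp Require Import all_classical all_reals all_analysis.
From mathcomp Require Import ring lra.
Import Order.TTheory GRing.Theory Num.Theory.
Import numFieldNormedType.Exports.
Local Open Scope classical_set_scope.
Local Open Scope ring_scope.
Set Implicit Arguments. Unset Strict Implicit. Unset Printing Implicit Defensive.


Section S.
Variable R : realType.
Implicit Types (f : R -> R) (x y z s : R).

Lemma inX x : (x \in @X R) = (0 <= x <= 1).
Proof.
rewrite /X; apply/idP/idP => [/set_mem /=|H]; first by rewrite in_itv.
by apply/mem_set; rewrite /= in_itv.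
Qed.

Definition chord f x y := (f y - f x) / (y - x).

Lemma cvx3 f x y z : convex_on_X f -> 0 <= x -> x < y -> y < z -> z <= 1 ->
  (z - x) * f y <= (z - y) * f x + (y - x) * f z.
Proof.
move=> cf x0 xy yz z1.
have zx : 0 < z - x by lra.
pose t := (z - y) / (z - x).
have t01 : 0 <= t <= 1.
  apply/andP; split; first by rewrite /t divr_ge0 //; lra.
  by rewrite /t ler_pdivrMr //; lra.
have := cf x z t; rewrite !inX => /(_ ltac:(lra) ltac:(lra) t01).
have -> : t * x + (1 - t) * z = y.
  rewrite /t; field; lra.
move=> H; rewrite -(ler_pM2l zx) in H.
apply: (le_trans H); rewrite mulrDr !mulrA /t; rewrite le_eqVlt; apply/orP; left; apply/eqP.
field; lra.
Qed.

Lemma line_chordR f x y s : x < y -> (f x + s * (y - x) <= f y) = (s <= chord f x y).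
Proof. move=> xy; rewrite /chord ler_pdivlMr ?subr_gt0 //; apply/idP/idP; lra. Qed.

Lemma line_chordL f x y s : x < y -> (f y + s * (x - y) <= f x) = (chord f x y <= s).
Proof. move=> xy; rewrite /chord ler_pdivrMr ?subr_gt0 //; apply/idP/idP; lra. Qed.

Lemma chord12 f x y z : convex_on_X f -> 0 <= x -> x < y -> y < z -> z <= 1 ->
  chord f x y <= chord f x z.
Proof.
move=> cf x0 xy yz z1; have := cvx3 cf x0 xy yz z1.
rewrite -line_chordL //.
set c := chord f x z.
have hc : c * (z - x) = f z - f x by rewrite /c /chord mulfVK //; lra.
move=> H.
have zx : 0 < z - x by lra.
rewrite -(ler_pM2l zx); nra.
Qed.

Lemma chord23 f x y z : convex_on_X f -> 0 <= x -> x < y -> y < z -> z <= 1 ->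
  chord f x z <= chord f y z.
Proof.
move=> cf x0 xy yz z1; have := cvx3 cf x0 xy yz z1.
rewrite -line_chordR //.
set c := chord f x z.
have hc : c * (z - x) = f z - f x by rewrite /c /chord mulfVK //; lra.
move=> H.
have zx : 0 < z - x by lra.
rewrite -(ler_pM2l zx); nra.
Qed.

Lemma chord13 f x y z : convex_on_X f -> 0 <= x -> x < y -> y < z -> z <= 1 ->
  chord f x y <= chord f y z.
Proof.
move=> cf x0 xy yz z1; apply: (le_trans (chord12 cf x0 xy yz z1)).
exact: chord23.
Qed.

Definition suppX f z s := forall w, 0 <= w <= 1 -> f z + s * (w - z) <= f w.

Lemma supp_ex f z : convex_on_X f -> 0 < z < 1 -> exists s, suppX f z s.
Proof.
move=> cf /andP[z0 z1].
pose E := [set c | exists2 x, 0 <= x < z & c = chord f x z].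
have E0 : E !=set0 by exists (chord f 0 z); exists 0 => //; lra.
have Eub : ubound E (chord f z 1).
  move=> c [x xz ->]; apply: chord13 => //; lra.
have hs : has_sup E by split => //; exists (chord f z 1).
exists (sup E) => w w01.
have [wz|zw|->] := ltgtP w z; last by rewrite subrr mulr0 addr0.
- rewrite line_chordL //; apply: sup_upper_bound => //; exists w => //; lra.
- rewrite line_chordR //; apply: ge_sup => // c [x xz ->].
  apply: chord13 => //; lra.
Qed.

Definition contX f := forall x, 0 <= x <= 1 -> forall e : R, 0 < e ->
  exists2 d : R, 0 < d & forall y, 0 <= y <= 1 -> `|y - x| < d -> `|f y - f x| < e.

Lemma within_contX f : {within @X R, continuous f} <-> contX f.
Proof.
rewrite subspace_continuousP; split.
- move=> H x x01 e e0.
  have Ax : X x by rewrite /X /= in_itv /=.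
  have := H x Ax; move/cvgrPdist_lt => /(_ e e0).
  rewrite near_withinE => /nbhs_ballP [d /= d0 Hd].
  exists d => // y y01 xy; rewrite distrC; apply: Hd.
    by rewrite /ball /= distrC.
  by rewrite /X /= in_itv /=.
- move=> H x Ax; apply/cvgrPdist_lt => e e0.
  rewrite near_withinE; apply/nbhs_ballP.
  have x01 : 0 <= x <= 1 by move: Ax; rewrite /X /= in_itv.
  have [d d0 Hd] := H x x01 e e0.
  exists d => //= y; rewrite /ball /= => xy Ay.
  rewrite distrC; apply: Hd; first by move: Ay; rewrite /X /= in_itv.
  by rewrite distrC.
Qed.

Lemma min_pos (d e : R) : 0 < d -> 0 < e -> exists m : R, [/\ 0 < m, m <= d & m <= e].
Proof. move=> d0 e0; case: (leP d e) => h; [exists d | exists e]; split => //; lra. Qed.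

Lemma contX_end f p q K : contX f -> 0 <= p -> p < q -> q <= 1 ->
  (forall y, p < y < q -> f y <= K) -> f p <= K /\ f q <= K.
Proof.
move=> cf p0 pq q1 H; split.
- rewrite leNgt; apply/negP => Kp.
  have [d d0 Hd] := cf p ltac:(lra) (f p - K) ltac:(lra).
  have qp : 0 < q - p by lra.
  have [m [m0 md mq]] := min_pos d0 qp.
  have hy : `|(p + m / 2) - p| < d by rewrite ltr_norml; apply/andP; split; lra.
  have := Hd (p + m / 2) ltac:(lra) hy; rewrite ltr_norml => /andP[h1 h2].
  have := H (p + m / 2) ltac:(lra); lra.
- rewrite leNgt; apply/negP => Kq.
  have [d d0 Hd] := cf q ltac:(lra) (f q - K) ltac:(lra).
  have qp : 0 < q - p by lra.
  have [m [m0 md mq]] := min_pos d0 qp.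
  have hy : `|(q - m / 2) - q| < d by rewrite ltr_norml; apply/andP; split; lra.
  have := Hd (q - m / 2) ltac:(lra) hy; rewrite ltr_norml => /andP[h1 h2].
  have := H (q - m / 2) ltac:(lra); lra.
Qed.

Lemma sup_contact f lo hi : contX f -> 0 <= lo -> lo <= hi -> hi <= 1 -> f lo <= 0 ->
  exists s, [/\ lo <= s, s <= hi, f s <= 0 & forall x, s < x <= hi -> 0 < f x].
Proof.
move=> cf l0 lh h1 fl.
pose E := [set x | lo <= x <= hi /\ f x <= 0].
have E0 : E lo by split => //; lra.
have Eub : ubound E hi by move=> x [/andP[]].
have hs : has_sup E by split; [exists lo | exists hi].
have ls : lo <= sup E by apply: sup_upper_bound.
have sh : sup E <= hi by apply: ge_sup => //; exists lo.
exists (sup E); split => //.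
- rewrite leNgt; apply/negP => fs.
  have [d d0 Hd] := cf (sup E) ltac:(lra) (f (sup E)) fs.
  have [e [Ee1 Ee2] se] := sup_adherent d0 hs.
  have es : e <= sup E by apply: sup_upper_bound.
  have he : `|e - sup E| < d by rewrite ltr_norml; apply/andP; split; lra.
  have := Hd e ltac:(lra) he; rewrite ltr_norml => /andP[h3 h4]; lra.
- move=> x /andP[sx xh]; rewrite ltNge; apply/negP => fx.
  have : x <= sup E by apply: sup_upper_bound => //; split => //; lra.
  lra.
Qed.

Lemma inf_contact f lo hi : contX f -> 0 <= lo -> lo <= hi -> hi <= 1 -> f hi <= 0 ->
  exists s, [/\ lo <= s, s <= hi, f s <= 0 & forall x, lo <= x < s -> 0 < f x].
Proof.
move=> cf l0 lh h1 fh.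
pose E := [set x | lo <= x <= hi /\ f x <= 0].
have E0 : E hi by split => //; lra.
have Elb : lbound E lo by move=> x [/andP[]].
have hs : has_lbound E by exists lo.
have ls : lo <= inf E by apply: lb_le_inf => //; exists hi.
have sh : inf E <= hi by apply: ge_inf.
exists (inf E); split => //.
- rewrite leNgt; apply/negP => fs.
  have [d d0 Hd] := cf (inf E) ltac:(lra) (f (inf E)) fs.
  have [e [Ee1 Ee2] se] := inf_adherent d0 (conj (ex_intro _ hi E0) hs).
  have es : inf E <= e by apply: ge_inf.
  have he : `|e - inf E| < d by rewrite ltr_norml; apply/andP; split; lra.
  have := Hd e ltac:(lra) he; rewrite ltr_norml => /andP[h3 h4]; lra.
- move=> x /andP[lx xs]; rewrite ltNge; apply/negP => fx.
  have : inf E <= x by apply: ge_inf => //; split => //; lra.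
  lra.
Qed.

Lemma dright_prop f a K0 : convex_on_X f -> 0 <= a -> a < 1 ->
  (forall y, a < y <= 1 -> f a + K0 * (y - a) <= f y) ->
  (forall y, 0 <= y <= 1 -> f a + dright f a * (y - a) <= f y) /\
  (forall K, (forall y, a < y <= 1 -> f a + K * (y - a) <= f y) -> K <= dright f a).
Proof.
move=> cf a0 a1 HK0.
pose q := fun h => (f (a + h) - f a) / h.
have qE : forall h, q h = chord f a (a + h).
  by move=> h; rewrite /q /chord; congr (_ / _); ring.
pose Q := q @` [set` Interval (BRight 0) (BLeft (1 - a))].
have inI : forall h, [set` Interval (BRight 0) (BLeft (1 - a))] h <-> 0 < h < 1 - a.
  by move=> h; rewrite /= in_itv.
have Qlb : lbound Q K0.
  move=> _ [h /inI hh <-]; rewrite qE -line_chordR; last lra.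
  apply: HK0; lra.
have Q0 : Q !=set0.
  exists (q ((1 - a) / 2)); exists ((1 - a) / 2) => //; apply/inI; lra.
have Hc : q x @[x --> 0^'+] --> inf Q.
  apply: nondecreasing_at_right_cvgr.
  - by rewrite bnd_simp; lra.
  - move=> h1 h2; rewrite !in_itv /= => /andP[h10 h11] /andP[h20 h21] h12.
    rewrite !qE; case: (ltgtP h1 h2) h12 => // [h12 _|-> //].
    apply: chord12 => //; lra.
  - by exists K0.
have dE : dright f a = inf Q by rewrite /dright; exact: cvg_lim Hc.
rewrite dE; split.
- move=> y y01; have [ya|ay|->] := ltgtP y a.
  + rewrite line_chordL //; apply: lb_le_inf => // _ [h /inI hh <-].
    rewrite qE; apply: chord13 => //; lra.
  + rewrite line_chordR //.
    have hQ : Q (q ((y - a) / 2)) by exists ((y - a) / 2) => //; apply/inI; lra.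
    apply: (le_trans (ge_inf (ex_intro _ K0 Qlb) hQ)).
    rewrite qE; apply: chord12 => //; lra.
  + by rewrite subrr mulr0 addr0.
- move=> K HK; apply: lb_le_inf => // _ [h /inI hh <-].
  rewrite qE -line_chordR; last lra.
  apply: HK; lra.
Qed.

Lemma dleft_prop f b K1 : convex_on_X f -> 0 < b -> b <= 1 ->
  (forall x, 0 <= x < b -> f b + K1 * (x - b) <= f x) ->
  (forall y, 0 <= y <= 1 -> f b + dleft f b * (y - b) <= f y) /\
  (forall K, (forall x, 0 <= x < b -> f b + K * (x - b) <= f x) -> dleft f b <= K).
Proof.
move=> cf b0 b1 HK1.
pose q := fun h => (f b - f (b - h)) / h.
have qE : forall h, q h = chord f (b - h) b.
  by move=> h; rewrite /q /chord; congr (_ / _); ring.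
pose Q := q @` [set` Interval (BRight 0) (BLeft b)].
have inI : forall h, [set` Interval (BRight 0) (BLeft b)] h <-> 0 < h < b.
  by move=> h; rewrite /= in_itv.
have Qub : ubound Q K1.
  move=> _ [h /inI hh <-]; rewrite qE -line_chordL; last lra.
  apply: HK1; lra.
have Q0 : Q !=set0.
  exists (q (b / 2)); exists (b / 2) => //; apply/inI; lra.
have Hc : q x @[x --> 0^'+] --> sup Q.
  apply: nonincreasing_at_right_cvgr.
  - by rewrite bnd_simp.
  - move=> h1 h2; rewrite !in_itv /= => /andP[h10 h11] /andP[h20 h21] h12.
    rewrite !qE; case: (ltgtP h1 h2) h12 => // [h12 _|-> //].
    apply: chord23 => //; lra.
  - by exists K1.
have dE : dleft f b = sup Q by rewrite /dleft; exact: cvg_lim Hc.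
have hsQ : has_sup Q by split => //; exists K1.
rewrite dE; split.
- move=> y y01; have [yb|by_|->] := ltgtP y b.
  + rewrite line_chordL //.
    have hQ : Q (q ((b - y) / 2)) by exists ((b - y) / 2) => //; apply/inI; lra.
    apply: (le_trans _ (sup_upper_bound hsQ hQ)).
    rewrite qE; apply: chord23 => //; lra.
  + rewrite line_chordR //; apply: ge_sup => // _ [h /inI hh <-].
    rewrite qE; apply: chord13 => //; lra.
  + by rewrite subrr mulr0 addr0.
- move=> K HK; apply: ge_sup => // _ [h /inI hh <-].
  rewrite qE -line_chordL; last lra.
  apply: HK; lra.
Qed.

Lemma max_dist (a b c d e : R) : `|a - c| < e -> `|b - d| < e ->
  `|Num.max a b - Num.max c d| < e.
Proof. rewrite !ltr_norml; case: (leP a b); case: (leP c d); lra. Qed.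

Lemma min_dist1 (x y b : R) : `|Num.min x b - Num.min y b| <= `|x - y|.
Proof.
have H1 : x - y <= `|x - y| := ler_norm _.
have H2 : y - x <= `|x - y| by rewrite distrC ler_norm.
rewrite ler_norml; case: (leP x b); case: (leP y b); lra.
Qed.

Lemma max_dist1 (a x y : R) : `|Num.max a x - Num.max a y| <= `|x - y|.
Proof.
have H1 : x - y <= `|x - y| := ler_norm _.
have H2 : y - x <= `|x - y| by rewrite distrC ler_norm.
rewrite ler_norml; case: (leP a x); case: (leP a y); lra.
Qed.

Lemma contX_ext f g : (forall x, 0 <= x <= 1 -> f x = g x) -> contX f -> contX g.
Proof.
move=> fg cf x x01 e e0; have [d d0 Hd] := cf x x01 e e0.
by exists d => // y y01 yx; rewrite -!fg //; apply: Hd.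
Qed.

Lemma contX_cst (c : R) : contX (fun _ => c).
Proof. by move=> x x01 e e0; exists 1 => // y _ _; rewrite subrr normr0. Qed.

Lemma contX_id : contX (fun x => x).
Proof. by move=> x x01 e e0; exists e. Qed.

Lemma contX_add f g : contX f -> contX g -> contX (fun x => f x + g x).
Proof.
move=> cf cg x x01 e e0.
have e2 : 0 < e / 2 by lra.
have [d1 d10 H1] := cf x x01 _ e2; have [d2 d20 H2] := cg x x01 _ e2.
have [m [m0 m1 m2]] := min_pos d10 d20.
exists m => // y y01 yx.
have := H1 y y01 ltac:(lra); have := H2 y y01 ltac:(lra).
rewrite !ltr_norml => /andP[? ?] /andP[? ?]; apply/andP; split; lra.
Qed.

Lemma contX_scale (k : R) f : contX f -> contX (fun x => k * f x).
Proof.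
move=> cf x x01 e e0.
have c0 : 0 < `|k| + 1 by rewrite ltr_pwDr ?normr_ge0.
have e2 : 0 < e / (`|k| + 1) by rewrite divr_gt0.
have [d d0 Hd] := cf x x01 _ e2.
exists d => // y y01 yx; have := Hd y y01 yx.
rewrite -mulrBr normrM.
have ee : e / (`|k| + 1) * (`|k| + 1) = e by rewrite mulfVK //; lra.
have kk := normr_ge0 k; have tt := normr_ge0 (f y - f x).
move=> H; nra.
Qed.

Lemma contX_max f g : contX f -> contX g -> contX (fun x => Num.max (f x) (g x)).
Proof.
move=> cf cg x x01 e e0.
have [d1 d10 H1] := cf x x01 _ e0; have [d2 d20 H2] := cg x x01 _ e0.
have [m [m0 m1 m2]] := min_pos d10 d20.
exists m => // y y01 yx; apply: max_dist; [apply: H1 | apply: H2] => //; lra.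
Qed.

Lemma contX_affine (m c : R) : contX (fun x => m * x + c).
Proof. apply: contX_add; [apply: contX_scale; exact: contX_id | exact: contX_cst]. Qed.

Definition clamp (a b x : R) := Num.max a (Num.min x b).

Lemma clamp_lip a b x y : `|clamp a b y - clamp a b x| <= `|y - x|.
Proof. rewrite /clamp; exact: le_trans (max_dist1 _ _ _) (min_dist1 _ _ _). Qed.

Lemma clamp_in a b x : a <= b -> a <= clamp a b x <= b.
Proof.
move=> ab; rewrite /clamp; case: (leP x b) => h; [case: (leP a x) | case: (leP a b)]; lra.
Qed.

Lemma contX_clamp (G : R -> R) a b : 0 <= a -> a <= b -> b <= 1 -> contX G ->
  contX (fun x => G (clamp a b x)).
Proof.
move=> a0 ab b1 cG x x01 e e0.
have cx := clamp_in x ab.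
have [d d0 Hd] := cG (clamp a b x) ltac:(lra) e e0.
exists d => // y y01 yx; have cy := clamp_in y ab.
apply: Hd; first lra.
exact: le_lt_trans (clamp_lip a b x y) yx.
Qed.

Lemma contX_within_sub f lo hi : contX f -> 0 <= lo -> hi <= 1 ->
  {within `[lo, hi], continuous f}.
Proof.
move=> cf l0 h1; apply/subspace_continuousP => x Ax.
apply/cvgrPdist_lt => e e0.
rewrite near_withinE; apply/nbhs_ballP.
have x01 : 0 <= x <= 1 by move: Ax; rewrite /= in_itv /= => /andP[]; lra.
have [d d0 Hd] := cf x x01 e e0.
exists d => //= y; rewrite /ball /= => xy Ay.
rewrite distrC; apply: Hd; first by move: Ay; rewrite /= in_itv /= => /andP[]; lra.
by rewrite distrC.
Qed.

Lemma cvx_max f g : convex_on_X f -> convex_on_X g ->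
  convex_on_X (fun x => Num.max (f x) (g x)).
Proof.
move=> cf cg x y t xX yX t01.
have hf := cf x y t xX yX t01; have hg := cg x y t xX yX t01.
have t0 : 0 <= t by case/andP: t01.
have t1 : 0 <= 1 - t by case/andP: t01 => _; lra.
have m1 := le_max (f x) (f x) (g x); have m2 := le_max (g x) (f x) (g x).
have m3 := le_max (f y) (f y) (g y); have m4 := le_max (g y) (f y) (g y).
rewrite !lexx /= ?orbT in m1 m2 m3 m4.
rewrite ge_max; apply/andP; split.
- apply: (le_trans hf); apply: lerD; apply: ler_wpM2l => //.
- apply: (le_trans hg); apply: lerD; apply: ler_wpM2l => //.
Qed.

Lemma eq_cvx f g : (forall x, f x = g x) -> convex_on_X f -> convex_on_X g.
Proof. by move=> fg cf x y t xX yX t01; rewrite -!fg; exact: cf. Qed.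

Lemma cvx_affine (m c : R) : convex_on_X (fun x => m * x + c).
Proof. move=> x y t _ _ _; rewrite le_eqVlt; apply/orP; left; apply/eqP; ring. Qed.

Lemma below_chord f p q x : convex_on_X f -> 0 <= p -> p < q -> q <= 1 -> p <= x <= q ->
  f x <= f p + chord f p q * (x - p).
Proof.
move=> cf p0 pq q1 /andP[px xq].
set c := chord f p q.
have hc : c * (q - p) = f q - f p by rewrite /c /chord mulfVK //; lra.
have [xp|] := eqVneq x p; first by rewrite xp subrr mulr0 addr0.
have [xq'|] := eqVneq x q; first by rewrite xq'; nra.
move=> xq2 xp2.
have px' : p < x by rewrite lt_neqAle eq_sym xp2.
have xq' : x < q by rewrite lt_neqAle xq2.
have := cvx3 cf p0 px' xq' q1.
have qp : 0 < q - p by lra.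
move=> H; rewrite -(ler_pM2l qp); nra.
Qed.

Lemma above_chord f p q x : convex_on_X f -> 0 <= p -> p < q -> q <= 1 -> 0 <= x <= 1 ->
  (x <= p) || (q <= x) -> f p + chord f p q * (x - p) <= f x.
Proof.
move=> cf p0 pq q1 /andP[x0 x1] /orP[xp|qx].
- have [->|xp'] := eqVneq x p; first by rewrite subrr mulr0 addr0.
  have xp2 : x < p by rewrite lt_neqAle xp'.
  rewrite line_chordL //; exact: chord13 cf x0 xp2 pq q1.
- have [->|qx'] := eqVneq x q.
    by rewrite /chord mulfVK; [lra | apply/eqP; lra].
  have qx2 : q < x by rewrite lt_neqAle eq_sym qx'.
  rewrite line_chordR; last lra.
  apply: chord12 => //.
Qed.

Lemma gap_affine F phi p q : convex_on_X F -> contX F -> contX phi ->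
  (forall x, 0 <= x <= 1 -> F x <= phi x) ->
  (forall g, convex_on_X g -> (forall y, 0 <= y <= 1 -> g y <= phi y) ->
     forall y, 0 <= y <= 1 -> g y <= F y) ->
  0 <= p -> p < q -> q <= 1 -> (forall x, p < x < q -> F x < phi x) ->
  forall x, p <= x <= q -> F x = F p + chord F p q * (x - p).
Proof.
move=> cF contF contP Fphi Fmax p0 pq q1 gapP.
set c := chord F p q.
have hc : c * (q - p) = F q - F p by rewrite /c /chord mulfVK //; lra.
pose L x := F p + c * (x - p).
pose D x := L x - F x.
have contD : contX D.
  apply: (contX_ext (f := fun x => (c * x + (F p - c * p)) + (-1) * F x)).
    by move=> x _; rewrite /D /L; ring.
  by apply: contX_add; [exact: contX_affine | exact: contX_scale].
have Dge0 : forall x, p <= x <= q -> 0 <= D x.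
  by move=> x hx; rewrite /D /L subr_ge0; exact: below_chord.
move=> x hx; apply/eqP; rewrite eq_le below_chord //=.
rewrite leNgt; apply/negP => Hw.
have Dw : 0 < D x by rewrite /D /L subr_gt0.
have [xs xsI xsM] := EVT_max (ltW pq) (contX_within_sub contD p0 q1).
move: xsI; rewrite in_itv /= => /andP[pxs xsq].
set Ds := D xs.
have DsDx : D x <= Ds by apply: xsM; rewrite in_itv /=.
have Dp : D p = 0 by rewrite /D /L subrr mulr0 addr0 subrr.
have Dq : D q = 0 by rewrite /D /L; lra.
pose c0 := Ds / 2.
have c0E : Ds = 2 * c0 by rewrite /c0; field.
have c00 : 0 < c0 by rewrite /c0; lra.
have [d1 d10 H1] := contD p ltac:(lra) c0 c00.
have [d2 d20 H2] := contD q ltac:(lra) c0 c00.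
have xsp : 0 < xs - p.
  rewrite subr_gt0; move: pxs; rewrite le_eqVlt => /orP[/eqP E|//].
  by move: DsDx; rewrite /Ds -E Dp; lra.
have qxs : 0 < q - xs.
  rewrite subr_gt0; move: xsq; rewrite le_eqVlt => /orP[/eqP E|//].
  by move: DsDx; rewrite /Ds E Dq; lra.
have [m1 [m10 m1a m1b]] := min_pos d10 xsp.
have [m2 [m20 m2a m2b]] := min_pos d20 qxs.
pose p1 := p + m1; pose q1' := q - m2.
have p1E : p1 = p + m1 by [].
have q1E : q1' = q - m2 by [].
clearbody p1 q1'.
have Dsmall : forall y, p <= y <= q -> (y < p1) || (q1' < y) -> D y < c0.
  move=> y /andP[py yq] /orP[yp|yq'].
  - have y01 : 0 <= y <= 1 by apply/andP; split; lra.
    have hy : `|y - p| < d1 by rewrite ger0_norm ?subr_ge0 //; lra.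
    have := H1 y y01 hy.
    rewrite Dp subr0 ltr_norml => /andP[]; lra.
  - have y01 : 0 <= y <= 1 by apply/andP; split; lra.
    have hy : `|y - q| < d2 by rewrite ler0_norm ?subr_le0 //; lra.
    have := H2 y y01 hy.
    rewrite Dq subr0 ltr_norml => /andP[]; lra.
pose G x := phi x - F x.
have contG : contX G.
  apply: (contX_ext (f := fun x => phi x + (-1) * F x)); first by move=> y _; rewrite /G; ring.
  by apply: contX_add => //; exact: contX_scale.
have p1q1 : p1 <= q1' by lra.
have h0p1 : 0 <= p1 by lra.
have hq11 : q1' <= 1 by lra.
have [xm xmI xmM] := EVT_min p1q1 (contX_within_sub contG h0p1 hq11).
move: xmI; rewrite in_itv /= => /andP[p1xm xmq1].
set eta := G xm.
have eta0 : 0 < eta by rewrite /eta /G subr_gt0; apply: gapP; lra.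
have [dl [dl0 dla dlb]] := min_pos c00 eta0.
pose g x := Num.max (F x) (L x - Ds + dl).
have cg : convex_on_X g.
  apply: cvx_max; first exact cF.
  apply: (eq_cvx (f := fun x => c * x + (F p - c * p - Ds + dl))); first by move=> y; rewrite /L; ring.
  exact: cvx_affine.
have gphi : forall y, 0 <= y <= 1 -> g y <= phi y.
  move=> y y01; rewrite /g ge_max Fphi //=.
  have [yin|yout] := boolP ((p <= y) && (y <= q)).
  - have [ys|ys] := boolP ((y < p1) || (q1' < y)).
    + have := Dsmall y yin ys; have := Fphi y y01; rewrite /D; lra.
    + have yI : p1 <= y <= q1'.
        by move: ys; rewrite negb_or -!leNgt => /andP[-> ->].
      have h1 := xmM y; rewrite in_itv /= in h1; have {h1} h1 := h1 yI.
      have h2 := xsM y; rewrite in_itv /= in h2; have {h2} h2 := h2 yin.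
      have DyE : D y = L y - F y by [].
      have GyE : G y = phi y - F y by [].
      have GxE : G xm = eta by [].
      have DxE : D xs = Ds by [].
      lra.
  - have yo : (y <= p) || (q <= y).
      move: yout; rewrite negb_and -!ltNge => /orP[h|h]; apply/orP; [left|right]; lra.
    have := above_chord cF p0 pq q1 y01 yo; have := Fphi y y01; rewrite -/c -/(L y).
    lra.
have xs01 : 0 <= xs <= 1 by apply/andP; split; lra.
have := Fmax g cg gphi xs xs01.
rewrite /g ge_max => /andP[_]; rewrite -/Ds /Ds /D; lra.
Qed.
End S.

Section S2.
Variable R : realType.
Implicit Types (f : R -> R) (x y z s : R).

Lemma cont_at_of f x K : 0 <= K ->
  (forall y, 0 <= y <= 1 -> f y - f x <= K * `|y - x|) ->
  (forall e : R, 0 < e -> exists2 d : R, 0 < d & forall y, 0 <= y <= 1 -> `|y - x| < d -> - e < f y - f x) ->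
  forall e : R, 0 < e -> exists2 d : R, 0 < d & forall y, 0 <= y <= 1 -> `|y - x| < d -> `|f y - f x| < e.
Proof.
move=> K0 HU HL e e0.
have [d1 d10 H1] := HL e e0.
have c0 : 0 < K + 1 by lra.
have e2 : 0 < e / (K + 1) by rewrite divr_gt0.
have [m [m0 m1 m2]] := min_pos d10 e2.
exists m => // y y01 yx.
have ee : e / (K + 1) * (K + 1) = e by rewrite mulfVK //; lra.
have hu := HU y y01; have hl := H1 y y01 ltac:(lra).
have nn := normr_ge0 (y - x).
rewrite ltr_norml; apply/andP; split; first lra.
have : K * `|y - x| < e by nra.
lra.
Qed.

Lemma upper_lip f x : convex_on_X f -> 0 <= x <= 1 ->
  exists2 K, 0 <= K & forall y, 0 <= y <= 1 -> f y - f x <= K * `|y - x|.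
Proof.
move=> cf /andP[x0 x1].
set c1 := chord f x 1; set c2 := chord f 0 x.
exists (`|c1| + `|c2|); first by rewrite addr_ge0.
move=> y /andP[y0 y1].
have n1 := normr_ge0 c1; have n2 := normr_ge0 c2.
have [yx|xy|->] := ltgtP y x; last by rewrite !subrr normr0 mulr0.
- have hb := @below_chord _ f 0 x y cf (lexx 0) ltac:(lra) x1 ltac:(apply/andP; split; lra).
  have hx : f x = f 0 + c2 * (x - 0) by rewrite /c2 /chord mulfVK; [ring | apply/eqP; lra].
  rewrite (ler0_norm (x := y - x)); last lra.
  have hc2 : c2 <= `|c2| := ler_norm _.
  have hc2' : - c2 <= `|c2| by rewrite -normrN ler_norm.
  rewrite -/c2 in hb; nra.
- have hb := @below_chord _ f x 1 y cf x0 ltac:(lra) (lexx 1) ltac:(apply/andP; split; lra).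
  rewrite (ger0_norm (x := y - x)); last lra.
  have hc1 : c1 <= `|c1| := ler_norm _.
  rewrite -/c1 in hb; nra.
Qed.

Lemma contX_cvx f l : convex_on_X f -> contX l ->
  (forall x, 0 <= x <= 1 -> l x <= f x) -> f 0 = l 0 -> f 1 = l 1 -> contX f.
Proof.
move=> cf cl lf f0 f1 x x01.
have [K K0 HK] := upper_lip cf x01.
apply: (cont_at_of K0 HK) => e e0.
have [x0|xne0] := eqVneq x 0.
  rewrite x0; have [d d0 Hd] := cl 0 ltac:(lra) e e0.
  exists d => // y y01 yx; have := Hd y y01 yx; rewrite ltr_norml => /andP[h _].
  have := lf y y01; lra.
have [x1|xne1] := eqVneq x 1.
  rewrite x1; have [d d0 Hd] := cl 1 ltac:(lra) e e0.
  exists d => // y y01 yx; have := Hd y y01 yx; rewrite ltr_norml => /andP[h _].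
  have := lf y y01; lra.
have xi : 0 < x < 1.
  by case/andP: x01 => h1 h2; apply/andP; split; rewrite lt_neqAle ?h1 ?h2 ?andbT // eq_sym.
have [s Hs] := supp_ex cf xi.
have c0 : 0 < `|s| + 1 by rewrite ltr_pwDr ?normr_ge0.
have e2 : 0 < e / (`|s| + 1) by rewrite divr_gt0.
exists (e / (`|s| + 1)) => // y y01 yx.
have := Hs y y01.
have ee : e / (`|s| + 1) * (`|s| + 1) = e by rewrite mulfVK //; lra.
have n1 := normr_ge0 s; have n2 := normr_ge0 (y - x).
have h3 : - (`|s| * `|y - x|) <= s * (y - x).
  by rewrite -normrM; have := ler_norm (- (s * (y - x))); rewrite normrN; lra.
nra.
Qed.

Lemma cvx_le_line f (m c p q x : R) : convex_on_X f -> 0 <= p -> p <= x -> x <= q -> q <= 1 ->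
  f p <= m * p + c -> f q <= m * q + c -> f x <= m * x + c.
Proof.
move=> cf p0 px xq q1 hp hq.
have [->|xp] := eqVneq x p => //.
have [->|xq'] := eqVneq x q => //.
have px' : p < x by rewrite lt_neqAle eq_sym xp.
have xq2 : x < q by rewrite lt_neqAle xq'.
have := cvx3 cf p0 px' xq2 q1.
have qp : 0 < q - p by lra.
move=> H; rewrite -(ler_pM2l qp); nra.
Qed.

Definition SuppS (slo shi : R) f := forall z, 0 < z < 1 ->
  exists2 s, slo <= s <= shi & suppX f z s.

Lemma SuppS_cvx slo shi f : SuppS slo shi f -> convex_on_X f.
Proof.
move=> Hs x y t; rewrite !inX => /andP[x0 x1] /andP[y0 y1] /andP[t0 t1].
have [->|xy] := eqVneq x y.
  have -> : t * y + (1 - t) * y = y by ring.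
  by have -> : t * f y + (1 - t) * f y = f y by ring.
have [->|tn0] := eqVneq t 0.
  have -> : 0 * x + (1 - 0) * y = y by ring.
  by have -> : 0 * f x + (1 - 0) * f y = f y by ring.
have [->|tn1] := eqVneq t 1.
  have -> : 1 * x + (1 - 1) * y = x by ring.
  by have -> : 1 * f x + (1 - 1) * f y = f x by ring.
have t0' : 0 < t by rewrite lt_neqAle eq_sym tn0.
have t1' : t < 1 by rewrite lt_neqAle tn1.
set z := t * x + (1 - t) * y.
have zi : 0 < z < 1.
  have : (x != y) by [].
  move=> _; apply/andP; split.
  - case: (ltgtP x y) xy => // h _; rewrite /z; nra.
  - case: (ltgtP x y) xy => // h _; rewrite /z; nra.
have [s _ Hsz] := Hs z zi.
have h1 := Hsz x ltac:(apply/andP; split; lra).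
have h2 := Hsz y ltac:(apply/andP; split; lra).
have : f z = t * (f z + s * (x - z)) + (1 - t) * (f z + s * (y - z)) by rewrite /z; ring.
move=> ->; apply: lerD; apply: ler_wpM2l => //; lra.
Qed.

Lemma SuppS_slopes slo shi f : SuppS slo shi f -> slopes_in f slo shi.
Proof.
move=> Hs s [z /andP[z0 z1] Hsub].
have hs : forall y, 0 <= y <= 1 -> f z + s * (y - z) <= f y.
  by move=> y y01; apply: Hsub; rewrite inX.
rewrite /= in_itv /=; apply/andP; split.
- have [s0 /andP[s0l _] H0] := Hs (z / 2) ltac:(apply/andP; split; lra).
  have := H0 z ltac:(apply/andP; split; lra); have := hs (z / 2) ltac:(apply/andP; split; lra).
  move=> h1 h2.
  have : (s0 - s) * (z / 2) <= 0 by nra.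
  rewrite pmulr_lle0; last lra.
  lra.
- have [s1 /andP[_ s1h] H1] := Hs ((z + 1) / 2) ltac:(apply/andP; split; lra).
  have := H1 z ltac:(apply/andP; split; lra); have := hs ((z + 1) / 2) ltac:(apply/andP; split; lra).
  move=> h1 h2.
  have : (s - s1) * ((1 - z) / 2) <= 0 by nra.
  rewrite pmulr_lle0; last lra.
  lra.
Qed.

Lemma SuppS_comb slo shi f g (t : R) : SuppS slo shi f -> SuppS slo shi g -> 0 <= t <= 1 ->
  SuppS slo shi (fun x => t * f x + (1 - t) * g x).
Proof.
move=> Hf Hg /andP[t0 t1] z zi.
have [sf /andP[sf1 sf2] Hsf] := Hf z zi; have [sg /andP[sg1 sg2] Hsg] := Hg z zi.
exists (t * sf + (1 - t) * sg).
  apply/andP; split; nra.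
move=> w w01; have := Hsf w w01; have := Hsg w w01; nra.
Qed.

Lemma SuppS_ext slo shi f g : (forall x, 0 <= x <= 1 -> f x = g x) ->
  SuppS slo shi f -> SuppS slo shi g.
Proof.
move=> fg Hf z zi; have [s hs Hs] := Hf z zi; exists s => // w w01.
rewrite -!fg //; last by case/andP: zi => *; apply/andP; split; lra.
exact: Hs.
Qed.
End S2.

Section S3.
Variable R : realType.

Lemma max2_near (m1 c1 m2 c2 a : R) : exists2 e : R, 0 < e &
  (forall x, a <= x <= a + e -> Num.max (m1 * x + c1) (m2 * x + c2) = m1 * x + c1) \/
  (forall x, a <= x <= a + e -> Num.max (m1 * x + c1) (m2 * x + c2) = m2 * x + c2).
Proof.
have n0 := normr_ge0 (m1 - m2).
have h1 : m1 - m2 <= `|m1 - m2| := ler_norm _.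
have h2 : - (m1 - m2) <= `|m1 - m2| by rewrite -normrN ler_norm.
have k0 : 0 < `|m1 - m2| + 1 by lra.
have [lt|gt|eq] := ltgtP (m1 * a + c1) (m2 * a + c2).
- set e := (m2 * a + c2 - (m1 * a + c1)) / (`|m1 - m2| + 1).
  have e0 : 0 < e by rewrite /e divr_gt0 //; lra.
  have ee : e * (`|m1 - m2| + 1) = m2 * a + c2 - (m1 * a + c1) by rewrite /e mulfVK //; lra.
  exists e => //; right => x /andP[ax xe].
  case: leP => // h; exfalso.
  have : (m1 - m2) * (x - a) <= `|m1 - m2| * e by nra.
  nra.
- set e := (m1 * a + c1 - (m2 * a + c2)) / (`|m1 - m2| + 1).
  have e0 : 0 < e by rewrite /e divr_gt0 //; lra.
  have ee : e * (`|m1 - m2| + 1) = m1 * a + c1 - (m2 * a + c2) by rewrite /e mulfVK //; lra.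
  exists e => //; left => x /andP[ax xe].
  case: leP => // h.
  have : (m2 - m1) * (x - a) <= `|m1 - m2| * e by nra.
  nra.
- exists 1 => //; case: (leP m1 m2) => hm; [right|left] => x /andP[ax xe];
  case: leP => // h; nra.
Qed.

Lemma max2_near_left (m1 c1 m2 c2 b : R) : exists2 e : R, 0 < e &
  (forall x, b - e <= x <= b -> Num.max (m1 * x + c1) (m2 * x + c2) = m1 * x + c1) \/
  (forall x, b - e <= x <= b -> Num.max (m1 * x + c1) (m2 * x + c2) = m2 * x + c2).
Proof.
have [e e0 H] := max2_near (- m1) c1 (- m2) c2 (- b).
exists e => //.
have E : forall m c x : R, - m * (- x) + c = m * x + c by move=> *; ring.
case: H => H; [left|right] => x /andP[h1 h2];
  by have := H (- x) ltac:(apply/andP; split; lra); rewrite !E.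
Qed.

Definition line3 (m0 c0 m1 c1 m2 c2 : R) (mc : R * R) :=
  (mc = (m0, c0)) \/ (mc = (m1, c1)) \/ (mc = (m2, c2)).

Definition max3 (m0 c0 m1 c1 m2 c2 x : R) :=
  Num.max (m0 * x + c0) (Num.max (m1 * x + c1) (m2 * x + c2)).

Lemma max3_near (m0 c0 m1 c1 m2 c2 a : R) : exists2 e : R, 0 < e &
  exists2 mc, line3 m0 c0 m1 c1 m2 c2 mc &
  forall x, a <= x <= a + e -> max3 m0 c0 m1 c1 m2 c2 x = mc.1 * x + mc.2.
Proof.
rewrite /max3.
have [e1 e10 H1] := max2_near m1 c1 m2 c2 a.
have key : forall mi ci, (forall x, a <= x <= a + e1 -> Num.max (m1 * x + c1) (m2 * x + c2) = mi * x + ci) ->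
  line3 m0 c0 m1 c1 m2 c2 (mi, ci) -> exists2 e : R, 0 < e &
  exists2 mc, line3 m0 c0 m1 c1 m2 c2 mc &
  forall x, a <= x <= a + e -> Num.max (m0 * x + c0) (Num.max (m1 * x + c1) (m2 * x + c2)) = mc.1 * x + mc.2.
  move=> mi ci Hi Li.
  have [e2 e20 H2] := max2_near m0 c0 mi ci a.
  have [m [m0' m1' m2']] := min_pos e10 e20.
  exists m => //; case: H2 => H2.
  - exists (m0, c0); first by left.
    move=> x /andP[h1 h2]; rewrite Hi; last lra.
    by rewrite H2 //; lra.
  - exists (mi, ci) => // x /andP[h1 h2]; rewrite Hi; last lra.
    by rewrite H2 //; lra.
case: H1 => H1; apply: (key _ _ H1); rewrite /line3; auto.
Qed.

Lemma max3_near_left (m0 c0 m1 c1 m2 c2 b : R) : exists2 e : R, 0 < e &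
  exists2 mc, line3 m0 c0 m1 c1 m2 c2 mc &
  forall x, b - e <= x <= b -> max3 m0 c0 m1 c1 m2 c2 x = mc.1 * x + mc.2.
Proof.
have [e e0 [[mm cc] L H]] := max3_near (- m0) c0 (- m1) c1 (- m2) c2 (- b).
exists e => //; exists (- mm, cc).
  by case: L => [[-> ->]|[[-> ->]|[-> ->]]]; rewrite /line3 !opprK; auto.
move=> x /andP[h1 h2]; have := H (- x) ltac:(apply/andP; split; lra).
rewrite /max3 /=.
have E : forall m c : R, - m * (- x) + c = m * x + c by move=> *; ring.
by rewrite !E => ->; ring.
Qed.

Lemma max_cases (x y : R) : (Num.max x y = y /\ x <= y) \/ (Num.max x y = x /\ y < x).
Proof. by case: leP; auto. Qed.

Lemma max3_pick (al be ga v : R) : v = Num.max al (Num.max be ga) ->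
  ((al < v) && (be < v) -> v = ga) /\ ((al < v) && (ga < v) -> v = be) /\
  ((be < v) && (ga < v) -> v = al).
Proof.
move=> ->.
case: (max_cases be ga) => [[-> h1]|[-> h1]];
  [case: (max_cases al ga) => [[-> h2]|[-> h2]] | case: (max_cases al be) => [[-> h2]|[-> h2]]];
  (split; [|split]) => /andP[]; lra.
Qed.

Lemma max3_eq (al be ga v : R) : al <= v -> be <= v -> ga <= v ->
  (al = v) \/ (be = v) \/ (ga = v) -> Num.max al (Num.max be ga) = v.
Proof.
move=> h1 h2 h3 H.
case: (max_cases be ga) => [[-> h4]|[-> h4]];
  [case: (max_cases al ga) => [[-> h5]|[-> h5]] | case: (max_cases al be) => [[-> h5]|[-> h5]]];
  case: H => [|[|]] h; lra.
Qed.

Lemma kq_arith (phz uz mq tq z q uq su0 Vz Vp c p Vq phq : R) :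
  phz <= 2 * uz - (mq + tq * (z - q)) -> uz + su0 * (q - z) <= uq -> Vz <= phz ->
  Vz = Vp + c * (z - p) -> Vq = Vp + c * (q - p) -> Vq = phq -> phq = 2 * uq - mq ->
  0 <= (c + tq - 2 * su0) * (q - z).
Proof. move=> *; nra. Qed.

Lemma kp_arith (phz uz mp tp z p up su0 Vz Vp c php : R) :
  phz <= 2 * uz - (mp + tp * (z - p)) -> uz + su0 * (p - z) <= up -> Vz <= phz ->
  Vz = Vp + c * (z - p) -> Vp = php -> php = 2 * up - mp ->
  0 <= (2 * su0 - c - tp) * (z - p).
Proof. move=> *; nra. Qed.

Lemma supp_glue (F : R -> R) (z p q s tp tq : R) : 0 <= p -> p < q -> q <= 1 ->
  (forall w, p <= w <= q -> 0 <= w <= 1 -> F z + s * (w - z) <= F w) ->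
  suppX F q tq -> suppX F p tp -> tp <= s -> s <= tq -> suppX F z s.
Proof.
move=> p0 pq q1 mid Wq Wp tps stq w w01.
have p01 : 0 <= p <= 1 by apply/andP; split; lra.
have q01 : 0 <= q <= 1 by apply/andP; split; lra.
have hqq : p <= q <= q by apply/andP; split; lra.
have hpp : p <= p <= q by apply/andP; split; lra.
case: (leP p w) => hpw; first case: (leP w q) => hwq.
- by apply: mid => //; apply/andP.
- have hp : 0 <= (tq - s) * (w - q) by apply: mulr_ge0; lra.
  have := Wq w w01; have := mid q hqq q01; lra.
- have hp : 0 <= (s - tp) * (p - w) by apply: mulr_ge0; lra.
  have := Wp w w01; have := mid p hpp p01; lra.
Qed.

Lemma third (m0 c0 m1 c1 m2 c2 : R) mc mj : line3 m0 c0 m1 c1 m2 c2 mc ->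
  line3 m0 c0 m1 c1 m2 c2 mj -> mc <> mj ->
  exists2 mk, line3 m0 c0 m1 c1 m2 c2 mk & forall x v, v = max3 m0 c0 m1 c1 m2 c2 x ->
    mc.1 * x + mc.2 < v -> mj.1 * x + mj.2 < v -> v = mk.1 * x + mk.2.
Proof.
rewrite /line3 /max3.
case=> [->|[->|->]]; case=> [->|[->|->]] => Hne; try by case: (Hne erefl).
- exists (m2, c2); first by auto.
  move=> x v Hv /= h1 h2; have [H _] := max3_pick Hv; apply: H; by rewrite h1 h2.
- exists (m1, c1); first by auto.
  move=> x v Hv /= h1 h2; have [_ [H _]] := max3_pick Hv; apply: H; by rewrite h1 h2.
- exists (m2, c2); first by auto.
  move=> x v Hv /= h1 h2; have [H _] := max3_pick Hv; apply: H; by rewrite h1 h2.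
- exists (m0, c0); first by auto.
  move=> x v Hv /= h1 h2; have [_ [_ H]] := max3_pick Hv; apply: H; by rewrite h1 h2.
- exists (m1, c1); first by auto.
  move=> x v Hv /= h1 h2; have [_ [H _]] := max3_pick Hv; apply: H; by rewrite h1 h2.
- exists (m0, c0); first by auto.
  move=> x v Hv /= h1 h2; have [_ [_ H]] := max3_pick Hv; apply: H; by rewrite h1 h2.
Qed.
End S3.

Section U.
Set Default Proof Using "All".
Variables (R : realType) (slo shi : R) (u : R -> R).
Hypotheses (cu : convex_on_X u) (contu : contX u) (su : slopes_in u slo shi).

Lemma contX_u_aff (k c : R) : contX (fun t => u t + (k * t + c)).
Proof. exact: contX_add contu (contX_affine k c). Qed.

Lemma supp_u_S z s : 0 < z < 1 -> suppX u z s -> slo <= s <= shi.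
Proof.
move=> zi hs.
have : subdiff_X u s.
  exists z => // y; rewrite inX; exact: hs.
by move/su; rewrite /= in_itv.
Qed.

Lemma SuppS_u : SuppS slo shi u.
Proof.
move=> z zi; have [s hs] := supp_ex cu zi; exists s => //; exact: supp_u_S hs.
Qed.

Lemma chord_hi x y : 0 <= x -> x < y -> y <= 1 -> u y + shi * (x - y) <= u x.
Proof.
move=> x0 xy y1.
have int : forall y', x < y' < 1 -> u y' + shi * (x - y') <= u x.
  move=> y' /andP[h1 h2].
  have yi : 0 < y' < 1 by apply/andP; split; lra.
  have [s /andP[s1 s2] hs] := SuppS_u yi.
  have x01 : 0 <= x <= 1 by apply/andP; split; lra.
  have := hs x x01.
  nra.
have [y1'|] := eqVneq y 1.
- rewrite y1'.
  have cf := contX_u_aff (- shi) (shi * x - u x).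
  have x1 : x < 1 by lra.
  have hh : forall y', x < y' < 1 -> u y' + (- shi * y' + (shi * x - u x)) <= 0.
    by move=> y' hy; have := int y' hy; lra.
  have [_ H] := contX_end cf x0 x1 (lexx 1) hh.
  lra.
- move=> yn1; apply: int; apply/andP; split => //.
  by rewrite lt_neqAle yn1.
Qed.

Lemma chord_lo x y : 0 <= x -> x < y -> y <= 1 -> u x + slo * (y - x) <= u y.
Proof.
move=> x0 xy y1.
have int : forall x', 0 < x' < y -> u x' + slo * (y - x') <= u y.
  move=> x' /andP[h1 h2].
  have xi : 0 < x' < 1 by apply/andP; split; lra.
  have [s /andP[s1 s2] hs] := SuppS_u xi.
  have y01 : 0 <= y <= 1 by apply/andP; split; lra.
  have := hs y y01.
  nra.
have [x0'|] := eqVneq x 0.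
- rewrite x0'.
  have cf := contX_u_aff (- slo) (slo * y - u y).
  have y0 : 0 < y by lra.
  have hh : forall x', 0 < x' < y -> u x' + (- slo * x' + (slo * y - u y)) <= 0.
    by move=> x' hx; have := int x' hx; lra.
  have [H _] := contX_end cf (lexx 0) y0 y1 hh.
  lra.
- move=> xn0; apply: int; apply/andP; split => //.
  by rewrite lt_neqAle eq_sym xn0.
Qed.
End U.

Section Main.
Set Default Proof Using "All".
Variables (R : realType) (slo shi : R) (u : R -> R) (a b : R).
Hypotheses (cu : convex_on_X u) (contu : contX u) (su : slopes_in u slo shi).
Hypotheses (a0 : 0 <= a) (ab : a < b) (b1 : b <= 1).
Ltac pull := have := a0; have := ab; have := b1; move=> ? ? ?.

Lemma da_prop :
  (forall y, 0 <= y <= 1 -> u a + dright u a * (y - a) <= u y) /\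
  (forall K, (forall y, a < y <= 1 -> u a + K * (y - a) <= u y) -> K <= dright u a).
Proof.
pull.
have a1 : a < 1 by move: ab b1; lra.
apply: (dright_prop (K0 := slo)) => // y /andP[h1 h2].
exact: (chord_lo cu contu su).
Qed.

Lemma db_prop :
  (forall y, 0 <= y <= 1 -> u b + dleft u b * (y - b) <= u y) /\
  (forall K, (forall x, 0 <= x < b -> u b + K * (x - b) <= u x) -> dleft u b <= K).
Proof.
pull.
have b0 : 0 < b by lra.
apply: (dleft_prop (K1 := shi)) => // x /andP[h1 h2].
exact: (chord_hi cu contu su).
Qed.

Lemma TaLe y : 0 <= y <= 1 -> tan_right u a y <= u y.
Proof. pull. by move=> y01; rewrite /tan_right; case: da_prop => H _; exact: H. Qed.

Lemma TbLe y : 0 <= y <= 1 -> tan_left u b y <= u y.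
Proof. pull. by move=> y01; rewrite /tan_left; case: db_prop => H _; exact: H. Qed.

Lemma da_S : slo <= dright u a <= shi.
Proof.
pull.
case: da_prop => H1 H2; apply/andP; split.
- apply: H2 => y /andP[h1 h2]; apply: (chord_lo cu contu su) => //; pull; lra.
- have hb : 0 <= b <= 1 by apply/andP; split; lra.
  have := H1 b hb; have := chord_hi cu contu su a0 ab b1.
  move=> h1 h2.
  have : (dright u a - shi) * (b - a) <= 0 by nra.
  rewrite pmulr_lle0; [lra | lra].
Qed.

Lemma db_S : slo <= dleft u b <= shi.
Proof.
pull.
case: db_prop => H1 H2; apply/andP; split.
- have ha : 0 <= a <= 1 by apply/andP; split; lra.
  have := H1 a ha; have := chord_lo cu contu su a0 ab b1.
  move=> h1 h2.
  have : (slo - dleft u b) * (b - a) <= 0 by nra.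
  rewrite pmulr_lle0; [lra | lra].
- apply: H2 => x /andP[h1 h2]; apply: (chord_hi cu contu su) => //; pull; lra.
Qed.

Lemma da_ge_left z s : 0 <= z -> z < a -> suppX u z s -> s <= dright u a.
Proof.
pull.
move=> z0 za hs.
have ha : 0 <= a <= 1 by apply/andP; split; lra.
have hz : 0 <= z <= 1 by apply/andP; split; lra.
have h1 := hs a ha; have h2 := TaLe hz; rewrite /tan_right in h2.
have : (s - dright u a) * (a - z) <= 0 by nra.
rewrite pmulr_lle0; [lra | lra].
Qed.

Lemma db_le_right z s : b < z -> z <= 1 -> suppX u z s -> dleft u b <= s.
Proof.
pull.
move=> bz z1 hs.
have hb : 0 <= b <= 1 by apply/andP; split; lra.
have hz : 0 <= z <= 1 by apply/andP; split; lra.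
have h1 := hs b hb; have h2 := TbLe hz; rewrite /tan_left in h2.
have : (dleft u b - s) * (z - b) <= 0 by nra.
rewrite pmulr_lle0; [lra | lra].
Qed.

Definition mx x := Num.max (tan_right u a x) (tan_left u b x).

Lemma mx_le x : 0 <= x <= 1 -> mx x <= u x.
Proof. pull. by move=> x01; rewrite /mx ge_max TaLe // TbLe. Qed.

Lemma mx_a : mx a = u a.
Proof.
pull.
have ha : 0 <= a <= 1 by apply/andP; split; lra.
have := TbLe ha; rewrite /mx /tan_right subrr mulr0 addr0 => h.
by apply/max_idPl.
Qed.

Lemma mx_b : mx b = u b.
Proof.
pull.
have hb : 0 <= b <= 1 by apply/andP; split; lra.
have := TaLe hb; rewrite /mx /tan_left subrr mulr0 addr0 => h.
by apply/max_idPr.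
Qed.

Definition phi := fun y => u y + gab u a b y.

Lemma phi_in x : a <= x <= b -> phi x = 2 * u x - mx x.
Proof. pull. by move=> hx; rewrite /phi /gab hx /mx; ring. Qed.

Lemma phi_out x : ~~ (a <= x <= b) -> phi x = u x.
Proof. pull. by move=> hx; rewrite /phi /gab (negbTE hx) addr0. Qed.

Lemma gab_clamp x : gab u a b x = u (clamp a b x) - mx (clamp a b x).
Proof.
pull.
rewrite /gab /clamp; case: (boolP (a <= x <= b)) => hx.
- case/andP: hx => h1 h2.
  have -> : Num.min x b = x by apply/min_idPl.
  by have -> : Num.max a x = x by apply/max_idPr.
- case: (leP x b) => h.
  + have xa : x < a by move: hx; rewrite h andbT -ltNge.
    have -> : Num.max a x = a by apply/max_idPl; lra.
    by rewrite mx_a subrr.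
  + have -> : Num.max a b = b by apply/max_idPr; lra.
    by rewrite mx_b subrr.
Qed.

Lemma contX_mx : contX mx.
Proof.
pull.
apply: contX_max.
- apply: (contX_ext (f := fun x => dright u a * x + (u a - dright u a * a))).
    by move=> x _; rewrite /tan_right; ring.
  exact: contX_affine.
- apply: (contX_ext (f := fun x => dleft u b * x + (u b - dleft u b * b))).
    by move=> x _; rewrite /tan_left; ring.
  exact: contX_affine.
Qed.

Lemma contX_phi : contX phi.
Proof.
pull.
apply: (contX_ext (f := fun x => u x + (u (clamp a b x) + (-1) * mx (clamp a b x)))).
  by move=> x _; rewrite /phi gab_clamp; ring.
apply: contX_add => //; apply: (contX_clamp (G := fun y => u y + (-1) * mx y)) => //; first lra.
apply: contX_add => //; apply: contX_scale; exact: contX_mx.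
Qed.

Lemma phi_ge x : 0 <= x <= 1 -> u x <= phi x.
Proof.
pull.
move=> x01; case: (boolP (a <= x <= b)) => hx; last by rewrite phi_out.
rewrite phi_in //; have := mx_le x01; lra.
Qed.

Lemma phi_le_line (l : R -> R) : (forall w, 0 <= w <= 1 -> l w <= u w) ->
  (forall w, a <= w <= b -> l w <= mx w) ->
  forall w, 0 <= w <= 1 -> phi w <= 2 * u w - l w.
Proof.
pull.
move=> H1 H2 w w01; case: (boolP (a <= w <= b)) => hw.
- by rewrite phi_in //; have := H2 w hw; lra.
- by rewrite phi_out //; have := H1 w w01; lra.
Qed.

Lemma gab_le_a x : x <= a -> phi x = u x.
Proof.
pull.
move=> xa; rewrite /phi gab_clamp /clamp.
have -> : Num.min x b = x by apply/min_idPl; lra.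
have -> : Num.max a x = a by apply/max_idPl.
by rewrite mx_a subrr addr0.
Qed.

Lemma gab_ge_b x : b <= x -> phi x = u x.
Proof.
pull.
move=> bx; rewrite /phi gab_clamp /clamp.
have -> : Num.min x b = b by apply/min_idPr.
have -> : Num.max a b = b by apply/max_idPr; lra.
by rewrite mx_b subrr addr0.
Qed.
Definition V := vex phi.

Lemma Vset_hs x : 0 <= x <= 1 ->
  has_sup [set g x | g in [set g : R -> R | convex_on_X g /\ forall y, y \in @X R -> g y <= phi y]].
Proof.
move=> x01; split.
- exists (u x); exists u => //; split => // y; rewrite inX => y01.
  exact: phi_ge.
- exists (phi x) => _ [g [_ hg] <-]; apply: hg; by rewrite inX.
Qed.

Lemma V_ub g : convex_on_X g -> (forall y, 0 <= y <= 1 -> g y <= phi y) ->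
  forall x, 0 <= x <= 1 -> g x <= V x.
Proof.
move=> cg hg x x01; apply: sup_upper_bound; first exact: Vset_hs.
exists g => //; split => // y; rewrite inX; exact: hg.
Qed.

Lemma V_ge_u x : 0 <= x <= 1 -> u x <= V x.
Proof. apply: V_ub => // y y01; exact: phi_ge. Qed.

Lemma V_le_phi x : 0 <= x <= 1 -> V x <= phi x.
Proof.
move=> x01; apply: ge_sup; first by case: (Vset_hs x01).
move=> _ [g [_ hg] <-]; apply: hg; by rewrite inX.
Qed.

Lemma V_cvx : convex_on_X V.
Proof.
move=> x y t xX yX t01.
have z01 : 0 <= t * x + (1 - t) * y <= 1.
  move: xX yX t01; rewrite !inX => /andP[? ?] /andP[? ?] /andP[? ?].
  apply/andP; split; nra.
apply: ge_sup; first by case: (Vset_hs z01).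
move=> _ [g [cg hg] <-].
have hx : g x <= V x.
  apply: V_ub => //; first by move=> w w01; apply: hg; rewrite inX.
  by rewrite -inX.
have hy : g y <= V y.
  apply: V_ub => //; first by move=> w w01; apply: hg; rewrite inX.
  by rewrite -inX.
apply: (le_trans (cg x y t xX yX t01)).
move: t01 => /andP[t0 t1].
apply: lerD; apply: ler_wpM2l => //; lra.
Qed.

Lemma V_eq x : 0 <= x <= 1 -> phi x = u x -> V x = u x.
Proof.
move=> x01 h; apply/eqP; rewrite eq_le V_ge_u // andbT -h; exact: V_le_phi.
Qed.

Lemma V0 : V 0 = u 0.
Proof. pull. apply: V_eq; first lra. by apply: gab_le_a. Qed.

Lemma V1 : V 1 = u 1.
Proof. pull. apply: V_eq; first lra. by apply: gab_ge_b. Qed.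

Lemma contX_V : contX V.
Proof.
apply: (contX_cvx V_cvx contu) => //; [exact: V_ge_u | exact: V0 | exact: V1].
Qed.

Lemma SuppS_V : SuppS slo shi V.
Proof.
move=> z zi; have /andP[z0 z1] := zi.
have [s hs] := supp_ex V_cvx zi.
have z01 : 0 <= z <= 1 by apply/andP; split; lra.
have o01 : 0 <= (0:R) <= 1 by apply/andP; split; lra.
have i01 : 0 <= (1:R) <= 1 by apply/andP; split; lra.
have h3 := V_ge_u z01.
exists s => //; apply/andP; split.
- have h1 := hs 0 o01; rewrite V0 in h1.
  have h2 := chord_lo cu contu su (lexx 0) z0 (ltW z1).
  have : (slo - s) * z <= 0 by nra.
  rewrite pmulr_lle0; [lra | lra].
- have h1 := hs 1 i01; rewrite V1 in h1.
  have h2 := chord_hi cu contu su (ltW z0) z1 (lexx 1).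
  have : (s - shi) * (1 - z) <= 0 by nra.
  rewrite pmulr_lle0; [lra | lra].
Qed.

Definition W x := 2 * u x - V x.

Lemma active q : a <= q <= b -> exists2 tau, slo <= tau <= shi &
  forall w, 0 <= w <= 1 -> phi w <= 2 * u w - (mx q + tau * (w - q)).
Proof.
move=> hq; rewrite {1}/mx; case: (leP (tan_right u a q) (tan_left u b q)) => h.
- exists (dleft u b); first exact: db_S.
  move=> w w01.
  have -> : tan_left u b q + dleft u b * (w - q) = tan_left u b w by rewrite /tan_left; ring.
  apply: phi_le_line => // [y y01|y hy]; first exact: TbLe.
  by rewrite /mx le_max lexx orbT.
- exists (dright u a); first exact: da_S.
  move=> w w01.
  have -> : tan_right u a q + dright u a * (w - q) = tan_right u a w by rewrite /tan_right; ring.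
  apply: phi_le_line => // [y y01|y hy]; first exact: TaLe.
  by rewrite /mx le_max lexx.
Qed.

Lemma contactW q : a <= q <= b -> V q = phi q -> exists2 tau, slo <= tau <= shi &
  suppX W q tau /\ (forall w, 0 <= w <= 1 -> phi w <= 2 * u w - (mx q + tau * (w - q))).
Proof.
pull.
move=> hq Vq; have [tau ht hl] := active hq; exists tau => //; split => // w w01.
have q01 : 0 <= q <= 1 by case/andP: hq => *; apply/andP; split; lra.
rewrite /W Vq phi_in //.
have := hl w w01; have := V_le_phi w01; lra.
Qed.

Lemma contX_W : contX W.
Proof.
apply: (contX_ext (f := fun x => 2 * u x + (-1) * V x)); first by move=> x _; rewrite /W; ring.
apply: contX_add; apply: contX_scale => //; exact: contX_V.
Qed.

Lemma SuppS_W : SuppS slo shi W.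
Proof.
pull.
move=> z zi; have /andP[z0 z1] := zi.
have z01 : 0 <= z <= 1 by apply/andP; split; lra.
have [hza|az] := ltP z a.
  have [s hs Hs] := SuppS_u cu contu su zi.
  have sda := da_ge_left (ltW z0) hza Hs.
  exists s => // w w01; rewrite /W.
  have Vz : V z = u z by apply: V_eq => //; apply: gab_le_a; lra.
  have hl : forall w, 0 <= w <= 1 -> phi w <= 2 * u w - (u z + s * (w - z)).
    apply: phi_le_line => [y y01|y /andP[ay yb]]; first exact: Hs.
    apply: (le_trans _ (_ : tan_right u a y <= mx y)); last by rewrite /mx le_max lexx.
    have ha : 0 <= a <= 1 by apply/andP; split; lra.
    have hp : 0 <= (dright u a - s) * (y - a) by apply: mulr_ge0; lra.
    have := Hs a ha; rewrite /tan_right; lra.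
  have := hl w w01; have := V_le_phi w01; lra.
have [hbz|zb] := ltP b z.
  have [s hs Hs] := SuppS_u cu contu su zi.
  have sdb := db_le_right hbz (ltW z1) Hs.
  exists s => // w w01; rewrite /W.
  have Vz : V z = u z by apply: V_eq => //; apply: gab_ge_b; lra.
  have hl : forall w, 0 <= w <= 1 -> phi w <= 2 * u w - (u z + s * (w - z)).
    apply: phi_le_line => [y y01|y /andP[ay yb]]; first exact: Hs.
    apply: (le_trans _ (_ : tan_left u b y <= mx y)); last by rewrite /mx le_max lexx orbT.
    have hb : 0 <= b <= 1 by apply/andP; split; lra.
    have hp : 0 <= (s - dleft u b) * (b - y) by apply: mulr_ge0; lra.
    have := Hs b hb; rewrite /tan_left; lra.
  have := hl w w01; have := V_le_phi w01; lra.
have azb : a <= z <= b by apply/andP.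
have := V_le_phi z01; rewrite le_eqVlt => /orP[/eqP Vz|Vz].
  by have [tau ht [H _]] := contactW azb Vz; exists tau.
pose f := fun x => phi x - V x.
have contf : contX f.
  apply: (contX_ext (f := fun x => phi x + (-1) * V x)); first by move=> x _; rewrite /f; ring.
  apply: contX_add; first exact: contX_phi.
  apply: contX_scale; exact: contX_V.
have a01 : 0 <= a <= 1 by apply/andP; split; lra.
have b01 : 0 <= b <= 1 by apply/andP; split; lra.
have fa : f a <= 0.
  by rewrite /f (V_eq a01 (gab_le_a (lexx a))) (gab_le_a (lexx a)) subrr.
have fb : f b <= 0.
  by rewrite /f (V_eq b01 (gab_ge_b (lexx b))) (gab_ge_b (lexx b)) subrr.
have fz : 0 < f z by rewrite /f subr_gt0.
have [p [ap pz fp Hp]] := sup_contact contf a0 az (ltW z1) fa.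
have [q [zq qb fq Hq]] := inf_contact contf (ltW z0) zb b1 fb.
have pz' : p < z by rewrite lt_neqAle pz andbT; apply/eqP => E; rewrite E in fp; lra.
have zq' : z < q by rewrite lt_neqAle zq andbT; apply/eqP => E; rewrite -E in fq; lra.
have p01 : 0 <= p <= 1 by apply/andP; split; lra.
have q01 : 0 <= q <= 1 by apply/andP; split; lra.
have Vp : V p = phi p by apply/eqP; rewrite eq_le V_le_phi //=; rewrite /f in fp; lra.
have Vq : V q = phi q by apply/eqP; rewrite eq_le V_le_phi //=; rewrite /f in fq; lra.
have gapH : forall x, p < x < q -> V x < phi x.
  move=> x /andP[px xq]; rewrite -subr_gt0; case: (leP x z) => hx.
  - by apply: (Hp x); apply/andP.
  - by apply: (Hq x); apply/andP; split; lra.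
have p0 : 0 <= p by lra.
have pq : p < q by lra.
have q1 : q <= 1 by lra.
have Vline := gap_affine V_cvx contX_V contX_phi V_le_phi V_ub p0 pq q1 gapH.
set c := chord V p q in Vline.
have [su0 hsu Hsu] := SuppS_u cu contu su zi.
have apq : a <= q <= b by apply/andP; split; lra.
have app : a <= p <= b by apply/andP; split; lra.
have [tq htq [Wq Lq]] := contactW apq Vq.
have [tp htp [Wp Lp]] := contactW app Vp.
have phip := phi_in app; have phiq := phi_in apq.
have hzpq : p <= z <= q by apply/andP; split; lra.
have hqpq : p <= q <= q by apply/andP; split; lra.
have hppq : p <= p <= q by apply/andP; split; lra.
have Vz' := Vline z hzpq.
have Vq' := Vline q hqpq.
have Vzphi := V_le_phi z01.
have kq : 0 <= (c + tq - 2 * su0) * (q - z).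
  exact: (kq_arith (Lq z z01) (Hsu q q01) Vzphi Vz' Vq' Vq phiq).
have kp : 0 <= (2 * su0 - c - tp) * (z - p).
  exact: (kp_arith (Lp z z01) (Hsu p p01) Vzphi Vz' Vp phip).
have tq' : 2 * su0 - c <= tq.
  by move: kq; rewrite pmulr_lge0; lra.
have tp' : tp <= 2 * su0 - c.
  by move: kp; rewrite pmulr_lge0; lra.
exists (2 * su0 - c).
  by case/andP: htq => *; case/andP: htp => *; apply/andP; split; lra.
have mid : forall w, p <= w <= q -> 0 <= w <= 1 -> W z + (2 * su0 - c) * (w - z) <= W w.
  move=> w hw w01; rewrite /W; have := Vline w hw; have := Hsu w w01; lra.
exact: (supp_glue p0 pq q1 mid Wq Wp tp' tq').
Qed.
End Main.

Section Iff.
Set Default Proof Using "All".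
Variables (R : realType) (slo shi : R) (u : R -> R) (a b : R).
Hypotheses (cu : convex_on_X u) (contu : contX u) (su : slopes_in u slo shi).
Hypotheses (a0 : 0 <= a) (ab : a < b) (b1 : b <= 1).
Ltac pull := have := a0; have := ab; have := b1; move=> ? ? ?.

Let phi_in' := phi_in cu contu su a0 ab b1.
Let gab_le_a' := gab_le_a cu contu su a0 ab b1.
Let gab_ge_b' := gab_ge_b cu contu su a0 ab b1.
Let TaLe' := TaLe cu contu su a0 ab b1.
Let TbLe' := TbLe cu contu su a0 ab b1.
Let mx_le' := mx_le cu contu su a0 ab b1.
Let contX_phi' := contX_phi cu contu su a0 ab b1.
Let V_ub' := V_ub cu contu su a0 ab b1.
Let V_ge_u' := V_ge_u cu contu su a0 ab b1.
Let phi_ge' := phi_ge cu contu su a0 ab b1.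
Let Vset_hs' := Vset_hs cu contu su a0 ab b1.
Let da_prop' := da_prop cu contu su a0 ab b1.
Let db_prop' := db_prop cu contu su a0 ab b1.

Lemma Acontact : exists pA, [/\ a <= pA, pA <= b,
  (forall x, a <= x <= pA -> u x = tan_right u a x) &
  (forall x, pA < x <= b -> tan_right u a x < u x)].
Proof.
pull.
pose f := fun x => u x + (- dright u a * x + (dright u a * a - u a)).
have cf : contX f := contX_u_aff cu contu su _ _.
have fa : f a <= 0 by rewrite /f; lra.
have ab' : a <= b by lra.
have [s [as_ sb fs Hs]] := sup_contact cf a0 ab' b1 fa.
exists s; split => //.
- move=> x /andP[ax xs]; apply/eqP; rewrite eq_le; apply/andP; split.
  + rewrite /tan_right.
    have -> : u a + dright u a * (x - a) = dright u a * x + (u a - dright u a * a) by ring.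
    apply: (cvx_le_line cu a0 ax xs); [lra | lra | by rewrite /f in fs; lra].
  + apply: TaLe'; apply/andP; split; lra.
- move=> x hx; have := Hs x hx; rewrite /f /tan_right; lra.
Qed.

Lemma Bcontact : exists qB, [/\ a <= qB, qB <= b,
  (forall x, qB <= x <= b -> u x = tan_left u b x) &
  (forall x, a <= x < qB -> tan_left u b x < u x)].
Proof.
pull.
pose f := fun x => u x + (- dleft u b * x + (dleft u b * b - u b)).
have cf : contX f := contX_u_aff cu contu su _ _.
have fb : f b <= 0 by rewrite /f; lra.
have ab' : a <= b by lra.
have [s [as_ sb fs Hs]] := inf_contact cf a0 ab' b1 fb.
exists s; split => //.
- move=> x /andP[sx xb]; apply/eqP; rewrite eq_le; apply/andP; split.
  + rewrite /tan_left.
    have -> : u b + dleft u b * (x - b) = dleft u b * x + (u b - dleft u b * b) by ring.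
    have s0 : 0 <= s by lra.
    apply: (cvx_le_line cu s0 sx xb); [lra | by rewrite /f in fs; lra | lra].
  + apply: TbLe'; apply/andP; split; lra.
- move=> x hx; have := Hs x hx; rewrite /f /tan_left; lra.
Qed.

Lemma phi_u_out pA qB : a <= pA -> qB <= b ->
  (forall x, a <= x <= pA -> u x = tan_right u a x) ->
  (forall x, qB <= x <= b -> u x = tan_left u b x) ->
  forall x, 0 <= x <= 1 -> (x <= pA) || (qB <= x) -> phi u a b x = u x.
Proof.
pull.
move=> apA qBb HA HB x x01 hx.
have [xa|ax] := leP x a; first exact: gab_le_a'.
have [bx|xb] := leP b x; first exact: gab_ge_b'.
have hxab : a <= x <= b by apply/andP; split; lra.
rewrite phi_in' //.
have : mx u a b x = u x.
  apply/eqP; rewrite eq_le mx_le' //=.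
  case/orP: hx => h.
  - by rewrite /mx le_max (HA x) ?lexx //; apply/andP; split; lra.
  - by rewrite /mx le_max (HB x) ?lexx ?orbT //; apply/andP; split; lra.
lra.
Qed.

Lemma fwd : (forall x, 0 <= x <= 1 -> V u a b x = u x) ->
  exists m0 c0 m1 c1 m2 c2 : R, forall x, a <= x <= b ->
   u x = Num.max (m0 * x + c0) (Num.max (m1 * x + c1) (m2 * x + c2)).
Proof.
pull.
move=> HV.
have [pA [apA pAb HA HA']] := Acontact.
have [qB [aqB qBb HB HB']] := Bcontact.
have TaE : forall x, tan_right u a x = (dright u a) * x + (u a - (dright u a) * a).
  by move=> x; rewrite /tan_right; ring.
have TbE : forall x, tan_left u b x = (dleft u b) * x + (u b - (dleft u b) * b).
  by move=> x; rewrite /tan_left; ring.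
case: (leP qB pA) => hqp.
- exists (dright u a), (u a - (dright u a) * a), (dleft u b), (u b - (dleft u b) * b), (dleft u b), (u b - (dleft u b) * b) => x hx.
  have x01 : 0 <= x <= 1 by case/andP: hx => *; apply/andP; split; lra.
  symmetry; apply: max3_eq; rewrite -?TaE -?TbE; [exact: TaLe' | exact: TbLe' | exact: TbLe' | ].
  case: (leP x pA) => h.
  + by left; symmetry; apply: HA; case/andP: hx => *; apply/andP; split; lra.
  + by right; left; symmetry; apply: HB; case/andP: hx => *; apply/andP; split; lra.
- have gapH : forall x, pA < x < qB -> u x < phi u a b x.
    move=> x /andP[h1 h2].
    have hxab : a <= x <= b by apply/andP; split; lra.
    rewrite phi_in' //.
    have : mx u a b x < u x.
      rewrite /mx gt_max HA' ?HB' //; apply/andP; split; lra.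
    lra.
  have Fmax : forall g, convex_on_X g -> (forall y, 0 <= y <= 1 -> g y <= phi u a b y) ->
      forall y, 0 <= y <= 1 -> g y <= u y.
    by move=> g cg hg y y01; rewrite -HV //; exact: V_ub'.
  have pA0 : 0 <= pA by lra.
  have qB1 : qB <= 1 by lra.
  have Uline := gap_affine cu contu contX_phi' phi_ge' Fmax pA0 hqp qB1 gapH.
  set c := chord u pA qB in Uline.
  have LE : forall y, c * y + (u pA - c * pA) = u pA + c * (y - pA) by move=> y; ring.
  exists (dright u a), (u a - (dright u a) * a), c, (u pA - c * pA), (dleft u b), (u b - (dleft u b) * b) => x hx.
  have x01 : 0 <= x <= 1 by case/andP: hx => *; apply/andP; split; lra.
  symmetry; apply: max3_eq.
  + by rewrite -TaE; exact: TaLe'.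
  + rewrite LE; case: (boolP ((pA <= x) && (x <= qB))) => h.
    * by rewrite -Uline.
    * apply: (above_chord cu pA0 hqp qB1 x01).
      by move: h; rewrite negb_and -!ltNge => /orP[h|h]; apply/orP; [left|right]; lra.
  + by rewrite -TbE; exact: TbLe'.
  + case: (leP x pA) => h1.
      by left; rewrite -TaE; symmetry; apply: HA; case/andP: hx => *; apply/andP; split; lra.
    case: (leP qB x) => h2.
      by right; right; rewrite -TbE; symmetry; apply: HB; case/andP: hx => *; apply/andP; split; lra.
    right; left; rewrite LE; symmetry; apply: Uline; apply/andP; split; lra.
Qed.

Lemma bwd (m0 c0 m1 c1 m2 c2 : R) :
  (forall x, a <= x <= b -> u x = max3 m0 c0 m1 c1 m2 c2 x) ->
  forall x, 0 <= x <= 1 -> V u a b x = u x.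
Proof.
pull.
move=> Hu.
have [pA [apA pAb HA HA']] := Acontact.
have [qB [aqB qBb HB HB']] := Bcontact.
have Hout := phi_u_out apA qBb HA HB.
suff key : forall g, convex_on_X g -> (forall y, y \in @X R -> g y <= phi u a b y) ->
    forall x, 0 <= x <= 1 -> g x <= u x.
  move=> x x01; apply/eqP; rewrite eq_le V_ge_u' // andbT.
  rewrite /V /vex; apply: ge_sup; first by case: (Vset_hs' x01).
  by move=> _ [g [cg hg] <-]; exact: key.
move=> g cg hg.
have hg' : forall y, 0 <= y <= 1 -> g y <= phi u a b y by move=> y y01; apply: hg; rewrite inX.
case: (leP qB pA) => hqp.
  move=> x x01; rewrite -(Hout x x01); first exact: hg'.
  by case: (leP x pA) => h //=; lra.
have ba : 0 < b - a by lra.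
have [e e0 [mc Lc Hc]] := max3_near m0 c0 m1 c1 m2 c2 a.
have [e' [e'0 e'e e'b]] := min_pos e0 ba.
have uae : forall y, a <= y <= a + e' -> u y = mc.1 * y + mc.2.
  move=> y /andP[h1 h2]; rewrite Hu; last by apply/andP; split; lra.
  by apply: Hc; apply/andP; split; lra.
have ua : u a = mc.1 * a + mc.2 by apply: uae; apply/andP; split; lra.
have chA : chord u a (a + e') = mc.1.
  rewrite /chord (uae (a + e')); last by apply/andP; split; lra.
  by rewrite ua; field; lra.
have da_eq : dright u a = mc.1.
  case: da_prop' => D1 D2.
  apply/eqP; rewrite eq_le; apply/andP; split.
  - have hy : 0 <= a + e' <= 1 by apply/andP; split; lra.
    have := D1 (a + e') hy; rewrite (uae (a + e')); last by apply/andP; split; lra.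
    rewrite ua => h.
    have : (dright u a - mc.1) * e' <= 0 by lra.
    by rewrite pmulr_lle0 //; lra.
  - apply: D2 => y /andP[ay y1].
    have y01 : 0 <= y <= 1 by apply/andP; split; lra.
    case: (leP y (a + e')) => hy.
      by rewrite (uae y) ?ua; [lra | apply/andP; split; lra].
    have ae : a < a + e' by lra.
    have ae1 : a + e' <= 1 by lra.
    have := above_chord cu a0 ae ae1 y01 (_ : (y <= a) || (a + e' <= y)).
    by rewrite chA; apply; apply/orP; right; lra.
have TaE : forall x, tan_right u a x = mc.1 * x + mc.2.
  by move=> x; rewrite /tan_right da_eq ua; ring.
have [e2 e20 [mj Lj Hj]] := max3_near_left m0 c0 m1 c1 m2 c2 b.
have [f' [f'0 f'e f'b]] := min_pos e20 ba.
have ube : forall y, b - f' <= y <= b -> u y = mj.1 * y + mj.2.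
  move=> y /andP[h1 h2]; rewrite Hu; last by apply/andP; split; lra.
  by apply: Hj; apply/andP; split; lra.
have ub : u b = mj.1 * b + mj.2 by apply: ube; apply/andP; split; lra.
have chB : chord u (b - f') b = mj.1.
  rewrite /chord (ube (b - f')); last by apply/andP; split; lra.
  by rewrite ub; field; lra.
have db_eq : dleft u b = mj.1.
  case: db_prop' => D1 D2.
  apply/eqP; rewrite eq_le; apply/andP; split.
  - apply: D2 => x /andP[x0 xb].
    have x01 : 0 <= x <= 1 by apply/andP; split; lra.
    case: (leP (b - f') x) => hx.
      by rewrite (ube x) ?ub; [lra | apply/andP; split; lra].
    have bf0 : 0 <= b - f' by lra.
    have bfb : b - f' < b by lra.
    have := above_chord cu bf0 bfb b1 x01 (_ : (x <= b - f') || (b <= x)).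
    rewrite chB (ube (b - f')); last by apply/andP; split; lra.
    move=> H; have := H ltac:(apply/orP; left; lra).
    rewrite ub; lra.
  - have hy : 0 <= b - f' <= 1 by apply/andP; split; lra.
    have := D1 (b - f') hy; rewrite (ube (b - f')); last by apply/andP; split; lra.
    rewrite ub => h.
    have : (mj.1 - dleft u b) * f' <= 0 by lra.
    by rewrite pmulr_lle0 //; lra.
have TbE : forall x, tan_left u b x = mj.1 * x + mj.2.
  by move=> x; rewrite /tan_left db_eq ub; ring.
have Hne : mc <> mj.
  move=> E; have hb : pA < b <= b by apply/andP; split; lra.
  have := HA' b hb; rewrite TaE E -TbE /tan_left subrr mulr0 addr0; lra.
have [mk Lk Hk] := third Lc Lj Hne.
have mid : forall x, pA < x < qB -> u x = mk.1 * x + mk.2.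
  move=> x /andP[h1 h2].
  have hx : a <= x <= b by apply/andP; split; lra.
  apply: (Hk x (u x)); first exact: Hu.
  - by rewrite -TaE; apply: HA'; apply/andP; split; lra.
  - by rewrite -TbE; apply: HB'; apply/andP; split; lra.
have cf := contX_u_aff cu contu su (- mk.1) (- mk.2).
have pA0 : 0 <= pA by lra.
have qB1 : qB <= 1 by lra.
have hh : forall y, pA < y < qB -> u y + (- mk.1 * y + - mk.2) <= 0.
  by move=> y hy; rewrite (mid y hy); lra.
have [EpA EqB] := contX_end cf pA0 hqp qB1 hh.
move=> x x01; case: (boolP ((x <= pA) || (qB <= x))) => hx.
  by rewrite -(Hout x x01 hx); exact: hg'.
move: hx; rewrite negb_or -!ltNge => /andP[h1 h2].
rewrite (mid x); last by apply/andP.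
have p01 : 0 <= pA <= 1 by apply/andP; split; lra.
have q01 : 0 <= qB <= 1 by apply/andP; split; lra.
have hp : (pA <= pA) || (qB <= pA) by rewrite lexx.
have hq : (qB <= pA) || (qB <= qB) by rewrite lexx orbT.
apply: (cvx_le_line cg pA0 (ltW h1) (ltW h2) qB1).
- by have := hg' pA p01; rewrite (Hout pA p01 hp); lra.
- by have := hg' qB q01; rewrite (Hout qB q01 hq); lra.
Qed.
End Iff.

Lemma vex_self (R : realType) (u : R -> R) x : convex_on_X u -> 0 <= x <= 1 -> vex u x = u x.
Proof.
move=> cu x01; rewrite /vex; apply/eqP; rewrite eq_le; apply/andP; split.
- apply: ge_sup; first by exists (u x); exists u.
  by move=> _ [g [_ hg] <-]; apply: hg; rewrite inX.
- apply: sup_upper_bound; last by exists u.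
  split; first by exists (u x); exists u.
  by exists (u x) => _ [g [_ hg] <-]; apply: hg; rewrite inX.
Qed.

Theorem lemma8 (R : realType) (slo shi : R) (ulo uhi u : R -> R) (a b : R) :
  slo <= shi ->
  cvxK ulo -> cvxK uhi -> slopes_in ulo slo shi -> slopes_in uhi slo shi ->
  (forall x, x \in @X R -> ulo x <= uhi x) ->
  (* u belongs to the CFI *)
  cvxK u -> (forall x, x \in @X R -> ulo x <= u x <= uhi x) -> slopes_in u slo shi ->
  (* I = [a,b] \subseteq X with ulo < u < uhi on I *)
  0 <= a -> a <= b -> b <= 1 ->
  (forall x, a <= x <= b -> ulo x < u x < uhi x) ->
  (forall eps : R, 0 <= eps <= 1 ->
     (cvxK (fun x => u x + eps * hab u a b x) /\
      slopes_in (fun x => u x + eps * hab u a b x) slo shi) /\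
     (cvxK (fun x => u x - eps * hab u a b x) /\
      slopes_in (fun x => u x - eps * hab u a b x) slo shi)) /\
  ((forall x, x \in @X R -> hab u a b x = 0) <->
   exists m0 c0 m1 c1 m2 c2 : R,
     forall x, a <= x <= b ->
       u x = Num.max (m0 * x + c0) (Num.max (m1 * x + c1) (m2 * x + c2))).
Proof.
move=> _ _ _ _ _ _ [contu' cu] _ su a0 ab b1 _.
have contu : contX u by apply/within_contX.
have Su := SuppS_u cu contu su.
have fin : forall f, contX f -> SuppS slo shi f -> cvxK f /\ slopes_in f slo shi.
  move=> f cf sf; split; last exact: SuppS_slopes sf.
  split; [exact/within_contX | exact: SuppS_cvx sf].
move: ab; rewrite le_eqVlt => /orP[/eqP eab|ab].
-
  subst b.
  have phiE : (fun y => u y + gab u a a y) = u.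
    apply: funext => y; rewrite /gab; case: (boolP (a <= y <= a)) => h; last by rewrite addr0.
    have -> : y = a by apply/eqP; rewrite eq_le andbC h.
    by rewrite /tan_right /tan_left !subrr !mulr0 !addr0 maxxx subrr addr0.
  have h0 : forall x, 0 <= x <= 1 -> hab u a a x = 0.
    by move=> x x01; rewrite /hab phiE vex_self // subrr.
  split.
  + move=> eps e01; split; apply: fin.
    * by apply: (contX_ext (f := u)) => // x x01; rewrite h0 // mulr0 addr0.
    * by apply: (SuppS_ext (f := u)) => // x x01; rewrite h0 // mulr0 addr0.
    * by apply: (contX_ext (f := u)) => // x x01; rewrite h0 // mulr0 subr0.
    * by apply: (SuppS_ext (f := u)) => // x x01; rewrite h0 // mulr0 subr0.
  + split => [_|_ x]; last by rewrite inX => x01; exact: h0.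
    exists 0, (u a), 0, (u a), 0, (u a) => x hx.
    have -> : x = a by apply/eqP; rewrite eq_le andbC hx.
    by rewrite mul0r add0r !maxxx.
- have hE : forall x, hab u a b x = V u a b x - u x by [].
  have cV := contX_V cu contu su a0 ab b1.
  have SV := SuppS_V cu contu su a0 ab b1.
  have SW := SuppS_W cu contu su a0 ab b1.
  have cW := contX_W cu contu su a0 ab b1.
  split.
  + move=> eps /andP[e0 e1].
    have e01 : 0 <= 1 - eps <= 1 by apply/andP; split; lra.
    split; apply: fin.
    * apply: (contX_ext (f := fun x => u x + eps * (V u a b x + (-1) * u x))).
        by move=> x _; rewrite hE; ring.
      apply: contX_add => //; apply: contX_scale; apply: contX_add => //.
      exact: contX_scale.
    * apply: (SuppS_ext (f := fun x => (1 - eps) * u x + (1 - (1 - eps)) * V u a b x)).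
        by move=> x _; rewrite hE; ring.
      exact: SuppS_comb.
    * apply: (contX_ext (f := fun x => u x + (- eps) * (V u a b x + (-1) * u x))).
        by move=> x _; rewrite hE; ring.
      apply: contX_add => //; apply: contX_scale; apply: contX_add => //.
      exact: contX_scale.
    * apply: (SuppS_ext (f := fun x => (1 - eps) * u x + (1 - (1 - eps)) * W u a b x)).
        by move=> x _; rewrite hE /W; ring.
      exact: SuppS_comb.
  + split.
    * move=> H; apply: (fwd cu contu su a0 ab b1) => x x01.
      have := H x; rewrite inX hE => /(_ x01); lra.
    * move=> [m0 [c0 [m1 [c1 [m2 [c2 Hu]]]]]] x; rewrite inX => x01.
      by rewrite hE (bwd cu contu su a0 ab b1 (m0 := m0) (c0 := c0) (m1 := m1) (c1 := c1) (m2 := m2) (c2 := c2) Hu) // subrr.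
Qed.
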